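(* The 2-sided ideal $\Delta[\Delta,\Delta]\Delta$ of $\Delta$ generated by $[\Delta,\Delta]={\rm Span}\{uv-vu : u,v\in\Delta\}$ coincides with the kernel of the unique $\mathbb F$-algebra homomorphism $\Delta\to\mathbb F[\overline A,\overline B,\overline C]$ sending $A\mapsto\overline A$, $B\mapsto\overline B$, $C\mapsto\overline C$, where $\overline A,\overline B,\overline C$ are mutually commuting indeterminates.
   Context: Let $\mathbb F$ be a field and fix a nonzero $q\in\mathbb F$ with $q^4\neq 1$. The universal Askey--Wilson algebra $\Delta$ is the associative $\mathbb F$-algebra with 1 with generators $A,B,C$ subject to the relations that each of $A+\frac{qBC-q^{-1}CB}{q^2-q^{-2}}$, $B+\frac{qCA-q^{-1}AC}{q^2-q^{-2}}$, $C+\frac{qAB-q^{-1}BA}{q^2-q^{-2}}$ is central. (The homomorphism to the polynomial algebra exists and is surjective.) *)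

(* Defs.v *)
From HB Require Import structures.
From mathcomp Require Import all_boot all_order all_algebra.
From mathcomp Require Export mpoly.
Set Implicit Arguments. Unset Strict Implicit. Unset Printing Implicit Defensive.
Import GRing.Theory.
Local Open Scope ring_scope.

Definition is_alg_hom (F : fieldType) (D R : algType F) (f : D -> R) : Prop :=
  [/\ forall (a : F) (x y : D), f (a *: x + y) = a *: f x + f y,
      forall x y : D, f (x * y) = f x * f y &
      f 1 = 1].

Definition central (F : fieldType) (R : algType F) (x : R) : Prop :=
  forall y : R, x * y = y * x.

Definition aw_term (F : fieldType) (R : algType F) (q : F) (u v : R) : R :=
  (q / (q ^+ 2 - q ^- 2)) *: (u * v) - (q^-1 / (q ^+ 2 - q ^- 2)) *: (v * u).

Definition AW_rel (F : fieldType) (q : F) (R : algType F) (a b c : R) : Prop :=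
  [/\ central (a + aw_term q b c),
      central (b + aw_term q c a) &
      central (c + aw_term q a b)].

(* (D, A, B, C) is the algebra presented by generators A, B, C and the
   Askey--Wilson relations: universal property of the presentation. *)
Definition is_universal_AW (F : fieldType) (q : F) (D : algType F) (A B C : D)
  : Prop :=
  AW_rel q A B C /\
  forall (R : algType F) (a b c : R), AW_rel q a b c ->
    exists f : D -> R,
      [/\ is_alg_hom f, f A = a, f B = b, f C = c &
          forall g : D -> R, is_alg_hom g -> g A = a -> g B = b -> g C = c ->
            forall x, g x = f x].

(* The two-sided ideal D [D,D] D generated by all commutators uv - vu:
   finite sums of elements x (uv - vu) y. *)
Definition comm_ideal (F : fieldType) (D : algType F) (z : D) : Prop :=
  exists s : seq (D * D * D * D),
    z = \sum_(t <- s) t.1.1.1 * (t.1.1.2 * t.1.2 - t.1.2 * t.1.1.2) * t.2.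

(* Main.v *)
Require Import Defs.
From HB Require Import structures.
From mathcomp Require Import all_boot all_order all_algebra.
From mathcomp Require Import mpoly.
From Stdlib Require Import ClassicalEpsilon.
Import GRing.Theory.
Local Open Scope ring_scope.
Set Implicit Arguments. Unset Strict Implicit. Unset Printing Implicit Defensive.

Section Ideal.
Context (F : fieldType) (D : algType F).
Implicit Types x y u v : D.

Lemma I0 : comm_ideal (0 : D).
Proof. by exists [::]; rewrite big_nil. Qed.

Lemma ID x y : comm_ideal x -> comm_ideal y -> comm_ideal (x + y).
Proof. by move=> [s ->] [t ->]; exists (s ++ t); rewrite big_cat. Qed.

Lemma IZ (a : F) x : comm_ideal x -> comm_ideal (a *: x).
Proof.
move=> [s ->]; exists [seq (a *: t.1.1.1, t.1.1.2, t.1.2, t.2) | t <- s].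
by rewrite big_map scaler_sumr; apply: eq_bigr => t _ /=; rewrite -!scalerAl.
Qed.

Lemma IN x : comm_ideal x -> comm_ideal (- x).
Proof. by move=> h; rewrite -scaleN1r; apply: IZ. Qed.

Lemma IB x y : comm_ideal x -> comm_ideal y -> comm_ideal (x - y).
Proof. by move=> hx hy; apply: ID => //; apply: IN. Qed.

Lemma IMl x y : comm_ideal x -> comm_ideal (y * x).
Proof.
move=> [s ->]; exists [seq (y * t.1.1.1, t.1.1.2, t.1.2, t.2) | t <- s].
by rewrite big_map mulr_sumr; apply: eq_bigr => t _ /=; rewrite !mulrA.
Qed.

Lemma IMr x y : comm_ideal x -> comm_ideal (x * y).
Proof.
move=> [s ->]; exists [seq (t.1.1.1, t.1.1.2, t.1.2, t.2 * y) | t <- s].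
by rewrite big_map mulr_suml; apply: eq_bigr => t _ /=; rewrite !mulrA.
Qed.

Lemma Icomm u v : comm_ideal (u * v - v * u).
Proof. by exists [:: (1, u, v, 1)]; rewrite big_seq1 /= mul1r mulr1. Qed.

Lemma Isum (I : Type) (r : seq I) (P : pred I) (G : I -> D) :
  (forall i, P i -> comm_ideal (G i)) -> comm_ideal (\sum_(i <- r | P i) G i).
Proof.
move=> h; elim/big_rec: _ => [|i z Pi Hz]; [exact: I0 | exact: ID (h _ Pi) Hz].
Qed.

Lemma Iprod n (a b : 'I_n -> D) :
  comm_ideal (\prod_(i < n) (a i * b i) - (\prod_(i < n) a i) * (\prod_(i < n) b i)).
Proof.
elim/big_rec3: _ => [|i Y X P _ IH]; first by rewrite mulr1 subrr; exact: I0.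
have -> : a i * b i * P - a i * X * (b i * Y) =
   a i * b i * (P - X * Y) + a i * (b i * X - X * b i) * Y.
  by rewrite !mulrBr !mulrBl !mulrA addrA subrK.
by apply: ID; [apply: IMl | apply: IMr; apply: IMl; apply: Icomm].
Qed.

End Ideal.
Section HMap.
Context (F : fieldType) (D : algType F) (n : nat) (hv : 'I_n -> D).

Definition hmap (p : {mpoly F[n]}) : D := mmap (GRing.in_alg D) hv p.

Lemma hmapD p q : hmap (p + q) = hmap p + hmap q.
Proof. exact: mmapD. Qed.

Lemma hmapZ (c : F) p : hmap (c *: p) = c *: hmap p.
Proof. by rewrite /hmap mmapZ /= mulr_algl. Qed.

Lemma hmap1 : hmap 1 = 1.
Proof. by rewrite /hmap -mpolyC1 mmapC /= scale1r. Qed.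

Lemma hmap0 : hmap 0 = 0.
Proof. exact: mmap0. Qed.

Lemma hmapX i : hmap 'X_i = hv i.
Proof. by rewrite /hmap mmapX mmap1U. Qed.

Lemma hmapM p q : comm_ideal (hmap (p * q) - hmap p * hmap q).
Proof.
pose i := (msize p + msize q)%N.
have hp : (msize p <= i)%N by exact: leq_addr.
have hq : (msize q <= i)%N by exact: leq_addl.
rewrite /hmap (mpolywME (k := i)) // raddf_sum /= !(mmapE i) //.
rewrite big_distrlr /= pair_bigA -sumrB; apply: Isum => -[j1 j2] _ /=.
rewrite mmapZ mmapX /= !mulr_algl -scalerAl -scalerAr scalerA -scalerBr.
apply: IZ.
have -> : mmap1 hv (j1 + j2)%MM = \prod_(k < n) (hv k ^+ j1 k * hv k ^+ j2 k).
  by apply: eq_bigr => k _; rewrite mnmDE exprD.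
exact: Iprod.
Qed.

End HMap.
Definition subalgP (F : fieldType) (D : algType F) (P : D -> Prop) :=
  [/\ P 1, (forall (a : F) x y, P x -> P y -> P (a *: x + y)) &
      (forall x y, P x -> P y -> P (x * y))].

Definition Gen (F : fieldType) (D : algType F) (A B C : D) (x : D) : Prop :=
  forall P : D -> Prop, subalgP P -> P A -> P B -> P C -> P x.

Definition Genb (F : fieldType) (D : algType F) (A B C : D) (x : D) : bool :=
  if excluded_middle_informative (Gen A B C x) then true else false.

Lemma GenbP (F : fieldType) (D : algType F) (A B C : D) x :
  Genb A B C x <-> Gen A B C x.
Proof. by rewrite /Genb; case: excluded_middle_informative. Qed.

Lemma Genb_closed (F : fieldType) (D : algType F) (A B C : D) :
  GRing.subsemialg_closed (Genb A B C).
Proof.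
apply: GRing.subalg_closed_semi; split.
- by apply/GenbP => P [] .
- move=> a x y /GenbP hx /GenbP hy; apply/GenbP => P hP hA hB hC.
  by case: (hP) => _ h _; apply: h; [apply: hx | apply: hy].
- move=> x y /GenbP hx /GenbP hy; apply/GenbP => P hP hA hB hC.
  by case: (hP) => _ _ h; apply: h; [apply: hx | apply: hy].
Qed.

HB.instance Definition _ (F : fieldType) (D : algType F) (A B C : D) :=
  GRing.isSubalgClosed.Build F D (Genb A B C) (Genb_closed A B C).

Definition GenT (F : fieldType) (D : algType F) (A B C : D) :=
  {x : D | Genb A B C x}.

HB.instance Definition _ (F : fieldType) (D : algType F) (A B C : D) :=
  [isSub of GenT A B C for @sval D (Genb A B C)].
HB.instance Definition _ (F : fieldType) (D : algType F) (A B C : D) :=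
  [Choice of GenT A B C by <:].
HB.instance Definition _ (F : fieldType) (D : algType F) (A B C : D) :=
  [SubChoice_isSubAlgebra of GenT A B C by <:].

Lemma valM (F : fieldType) (D : algType F) (A B C : D) (x y : GenT A B C) :
  val (x * y) = val x * val y.
Proof. exact: rmorphM. Qed.
Lemma valZ (F : fieldType) (D : algType F) (A B C : D) a (x y : GenT A B C) :
  val (a *: x + y) = a *: val x + val y.
Proof. by rewrite raddfD; congr (_ + _). Qed.

Lemma valD (F : fieldType) (D : algType F) (A B C : D) (x y : GenT A B C) :
  val (x + y) = val x + val y.
Proof. by []. Qed.

Lemma valZ1 (F : fieldType) (D : algType F) (A B C : D) a (x : GenT A B C) :
  val (a *: x) = a *: val x.
Proof. by []. Qed.

Lemma val_aw (F : fieldType) (D : algType F) (A B C : D) q (u v : GenT A B C) :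
  val (aw_term q u v) = aw_term q (val u) (val v).
Proof. rewrite /aw_term raddfB; congr (_ - _); rewrite /= valM //. Qed.

Lemma gen_all (F : fieldType) (q : F) (D : algType F) (A B C : D)
  (hD : is_universal_AW q A B C) x : Gen A B C x.
Proof.
have mA : Genb A B C A by apply/GenbP => P _ hA _ _.
have mB : Genb A B C B by apply/GenbP => P _ _ hB _.
have mC : Genb A B C C by apply/GenbP => P _ _ _ hC.
pose a : GenT A B C := exist _ A mA.
pose b : GenT A B C := exist _ B mB.
pose c : GenT A B C := exist _ C mC.
have cen : forall u v w : GenT A B C, central (val u + aw_term q (val v) (val w)) ->
    central (u + aw_term q v w).
  move=> u v w h y; apply: val_inj; rewrite !valM valD val_aw; exact: h.
have hrel : AW_rel q a b c.
  by case: hD => -[h1 h2 h3] _; split; apply: cen.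
case: hD => hrelD univ.
have [g [hg gA gB gC _]] := univ _ a b c hrel.
have [f0 [_ _ _ _ u0]] := univ _ A B C hrelD.
have e1 : forall y, id y = f0 y by apply: u0 => //; split.
have e2 : forall y, val (g y) = f0 y.
  apply: u0; try by [rewrite gA|rewrite gB|rewrite gC].
  case: hg => h1 h2 h3; split.
  - by move=> k y z; rewrite h1 valZ.
  - by move=> y z; rewrite h2 valM.
  - by rewrite h3.
have : val (g x) = x by exact: (etrans (e2 x) (esym (e1 x))).
move=> <-; apply/GenbP; exact: (valP (g x)).
Qed.

Theorem proposition11p4 (F : fieldType) (q : F) (hq0 : q != 0)
  (hq4 : q ^+ 4 != 1)
  (D : algType F) (A B C : D) (hD : is_universal_AW q A B C)
  (f : D -> {mpoly F[3]}) (hf : is_alg_hom f)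
  (hA : f A = 'X_0) (hB : f B = 'X_1) (hC : f C = 'X_2) :
  forall z : D, comm_ideal z <-> f z = 0.
Proof.
case: hf => fl fM f1.
have fD : forall x y, f (x + y) = f x + f y.
  by move=> x y; have := fl 1 x y; rewrite !scale1r.
have f0 : f 0 = 0.
  by apply/eqP; rewrite -(subrr (f 0)) -{2}[0 : D]addr0 fD addrK.
have fZ : forall (k : F) x, f (k *: x) = k *: f x.
  by move=> k x; rewrite -[k *: x]addr0 fl f0 addr0.
have fB : forall x y, f (x - y) = f x - f y.
  by move=> x y; rewrite -scaleN1r addrC fl scaleN1r addrC.
move=> z; split.
  case=> s ->; elim/big_rec: _ => [//|t w _ IH].
  by rewrite fD IH !fM fB !fM [f t.1.2 * _]mulrC subrr mulr0 mul0r addr0.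
move=> fz.
pose hv : 'I_3 -> D := fun i => nth 0 [:: A; B; C] i.
pose P x := comm_ideal (x - hmap hv (f x)).
have hP : subalgP P.
  split.
  - by rewrite /P f1 hmap1 subrr; exact: I0.
  - move=> k x y hx hy; rewrite /P fl hmapD hmapZ.
    have -> : k *: x + y - (k *: hmap hv (f x) + hmap hv (f y)) =
      k *: (x - hmap hv (f x)) + (y - hmap hv (f y)).
      by rewrite scalerBr addrACA opprD.
    by apply: ID => //; apply: IZ.
  - move=> x y hx hy; rewrite /P fM.
    have -> : x * y - hmap hv (f x * f y) =
      (x - hmap hv (f x)) * y + hmap hv (f x) * (y - hmap hv (f y))
      - (hmap hv (f x * f y) - hmap hv (f x) * hmap hv (f y)).
      by rewrite mulrBl mulrBr subrKA opprB subrKA.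
    apply: IB; last exact: hmapM.
    by apply: ID; [apply: IMr | apply: IMl].
have : P z.
  apply: (gen_all hD) => //.
  - by rewrite /P hA hmapX subrr; exact: I0.
  - by rewrite /P hB hmapX subrr; exact: I0.
  - by rewrite /P hC hmapX subrr; exact: I0.
by rewrite /P fz hmap0 subr0.
Qed.
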